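(* Let $0<\kappa_p<\kappa_s$ and $0<R'<R$. Then for all sufficiently large $n$ and $j=1,2$, \[ \Big|\frac{h_n^{(j)}(\kappa_pR)}{h_n^{(j)}(\kappa_pR')}-\frac{h_n^{(j)}(\kappa_sR)}{h_n^{(j)}(\kappa_sR')}\Big|\le\frac{14}{3}\,\frac{\kappa_s(\kappa_s-\kappa_p)}{n}\,R(R-R')\Big(\frac{R'}{R}\Big)^{n+1}. \]
   Context: $h_n^{(1)}$ and $h_n^{(2)}$ denote the spherical Hankel functions of the first and second kind of order $n$ (for real arguments $h_n^{(2)}=\overline{h_n^{(1)}}$). *)

(* Defs.v *)
From Stdlib Require Import Reals.
From Coquelicot Require Import Coquelicot.
Open Scope R_scope.

Definition cexpi (x : R) : Complex.C := (cos x, sin x).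

(* Spherical Hankel function of the first kind, order n, real argument x > 0
   (DLMF 10.49.6, explicit finite form):
   h_n^(1)(x) = (-i)^(n+1) e^{ix}/x * sum_{k=0}^n i^k (n+k)! / (k! (n-k)! (2x)^k). *)
Definition sph_hankel1 (n : nat) (x : R) : Complex.C :=
  Cmult (Cmult (Cpow (Copp Ci) (S n)) (Cmult (cexpi x) (RtoC (/ x))))
    (sum_n (fun k : nat =>
       Cmult (Cpow Ci k)
         (RtoC (INR (Factorial.fact (n + k)) /
                (INR (Factorial.fact k) * INR (Factorial.fact (n - k)) * (2 * x) ^ k)))) n).

(* Second kind: for real arguments h_n^(2) = conj h_n^(1). *)
Definition sph_hankel2 (n : nat) (x : R) : Complex.C := Cconj (sph_hankel1 n x).

Definition sph_hankel (j : nat) (n : nat) (x : R) : Complex.C :=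
  if Nat.eqb j 1 then sph_hankel1 n x else sph_hankel2 n x.

(* Main.v *)
Require Import Defs.
From Stdlib Require Import Reals Lra Lia Factorial ZArith.
From Coquelicot Require Import Coquelicot.
Open Scope R_scope.

Definition Cder (f : R -> C) (t : R) (l : C) :=
  is_derive (fun s => fst (f s)) t (fst l) /\ is_derive (fun s => snd (f s)) t (snd l).

Lemma Cder_ext f g t l : (forall s, f s = g s) -> Cder f t l -> Cder g t l.
Proof.
  intros E [H1 H2]; split.
  - eapply is_derive_ext; [|exact H1]. intros s; simpl; now rewrite E.
  - eapply is_derive_ext; [|exact H2]. intros s; simpl; now rewrite E.
Qed.

Lemma Cder_eq f t l l' : l = l' -> Cder f t l -> Cder f t l'.
Proof. intros ->; auto. Qed.

Lemma Cder_plus f g t a b : Cder f t a -> Cder g t b ->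
  Cder (fun s => Cplus (f s) (g s)) t (Cplus a b).
Proof.
  intros [A1 A2] [B1 B2]; split; simpl.
  - apply (is_derive_plus (fun s => fst (f s)) (fun s => fst (g s))); auto.
  - apply (is_derive_plus (fun s => snd (f s)) (fun s => snd (g s))); auto.
Qed.

Lemma Cder_minus f g t a b : Cder f t a -> Cder g t b ->
  Cder (fun s => Cminus (f s) (g s)) t (Cminus a b).
Proof.
  intros [A1 A2] [B1 B2]; split; simpl.
  - apply (is_derive_minus (fun s => fst (f s)) (fun s => fst (g s))); auto.
  - apply (is_derive_minus (fun s => snd (f s)) (fun s => snd (g s))); auto.
Qed.

Lemma Cder_mult f g t a b : Cder f t a -> Cder g t b ->
  Cder (fun s => Cmult (f s) (g s)) t (Cplus (Cmult a (g t)) (Cmult (f t) b)).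
Proof.
  intros [A1 A2] [B1 B2]; split.
  - pose proof (is_derive_minus (fun s => fst (f s) * fst (g s)) (fun s => snd (f s) * snd (g s)) t _ _
      (is_derive_mult _ _ t _ _ A1 B1 (fun n m => Rmult_comm n m))
      (is_derive_mult _ _ t _ _ A2 B2 (fun n m => Rmult_comm n m))) as K.
    replace (fst (Cplus (Cmult a (g t)) (Cmult (f t) b))) with
      (minus (plus (fst a * fst (g t)) (fst (f t) * fst b)) (plus (snd a * snd (g t)) (snd (f t) * snd b))).
    + eapply is_derive_ext; [|exact K]. intros s. reflexivity.
    + unfold minus, plus, opp; simpl. ring.
  - pose proof (is_derive_plus (fun s => fst (f s) * snd (g s)) (fun s => snd (f s) * fst (g s)) t _ _
      (is_derive_mult _ _ t _ _ A1 B2 (fun n m => Rmult_comm n m))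
      (is_derive_mult _ _ t _ _ A2 B1 (fun n m => Rmult_comm n m))) as K.
    replace (snd (Cplus (Cmult a (g t)) (Cmult (f t) b))) with
      (plus (plus (fst a * snd (g t)) (fst (f t) * snd b)) (plus (snd a * fst (g t)) (snd (f t) * fst b))).
    + eapply is_derive_ext; [|exact K]. intros s. reflexivity.
    + unfold plus; simpl. ring.
Qed.

Lemma Cder_const (c : C) t : Cder (fun _ => c) t 0.
Proof. split; [exact (is_derive_const (fst c) t)|exact (is_derive_const (snd c) t)]. Qed.

Lemma Cder_RtoC (r : R -> R) t dr : is_derive r t dr -> Cder (fun s => RtoC (r s)) t (RtoC dr).
Proof. intros H; split; [exact H|exact (is_derive_const 0 t)]. Qed.

Lemma Cder_cexpi t : Cder cexpi t (Cmult Ci (cexpi t)).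
Proof.
  split; simpl.
  - eapply is_derive_ext. intros; reflexivity.
    replace (0 * cos t - 1 * sin t) with (- sin t) by ring. apply is_derive_cos.
  - replace (0 * sin t + 1 * cos t) with (cos t) by ring. apply is_derive_sin.
Qed.

Lemma Cder_sum_n (f : nat -> R -> C) (l : nat -> C) t n :
  (forall k, Cder (f k) t (l k)) ->
  Cder (fun s => sum_n (fun k => f k s) n) t (sum_n l n).
Proof.
  intros H; induction n.
  - apply (Cder_ext (f 0%nat)). intros s; now rewrite sum_O.
    rewrite sum_O; auto.
  - apply (Cder_ext (fun s => Cplus (sum_n (fun k => f k s) n) (f (S n) s))).
    intros s; rewrite sum_Sn; reflexivity.
    rewrite sum_Sn. apply (Cder_plus (fun s => sum_n (fun k => f k s) n) (f (S n))); auto.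
Qed.

Lemma C_bv (f f' : R -> C) (D y : R) :
  (forall t, Rabs t <= Rabs y -> Cder f t (f' t) /\ Cmod (f' t) <= D) ->
  Cmod (Cminus (f y) (f 0)) <= 2 * D * Rabs y.
Proof.
  intros H.
  assert (H1 : Rabs (fst (f y) - fst (f 0)) <= D * Rabs (y - 0)).
  { apply (bounded_variation (fun s => fst (f s)) (fun t => fst (f' t))). intros t Ht.
    rewrite !Rminus_0_r in Ht. destruct (H t Ht) as [[d1 d2] b]; split; auto.
    eapply Rle_trans; [|exact b]. eapply Rle_trans; [|apply Rmax_Cmod]. apply Rmax_l. }
  assert (H2 : Rabs (snd (f y) - snd (f 0)) <= D * Rabs (y - 0)).
  { apply (bounded_variation (fun s => snd (f s)) (fun t => snd (f' t))). intros t Ht.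
    rewrite !Rminus_0_r in Ht. destruct (H t Ht) as [[d1 d2] b]; split; auto.
    eapply Rle_trans; [|exact b]. eapply Rle_trans; [|apply Rmax_Cmod]. apply Rmax_r. }
  rewrite Rminus_0_r in H1, H2.
  eapply Rle_trans; [apply Cmod_2Rmax|]. simpl.
  assert (0 <= D * Rabs y) by (eapply Rle_trans; [apply Rabs_pos|exact H1]).
  assert (sqrt 2 <= 2).
  { rewrite <- (sqrt_square 2) at 2 by lra. apply sqrt_le_1_alt. lra. }
  assert (Rmax (Rabs (fst (f y) - fst (f 0))) (Rabs (snd (f y) - snd (f 0))) <= D * Rabs y)
    by (apply Rmax_lub; auto).
  assert (0 <= Rmax (Rabs (fst (f y) - fst (f 0))) (Rabs (snd (f y) - snd (f 0))))
    by (eapply Rle_trans; [apply Rabs_pos| apply Rmax_l]).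
  unfold Rminus in *. nra.
Qed.
Definition alpha (n k : nat) : R :=
  INR (fact (n + k)) / (INR (fact k) * INR (fact (n - k)) * 2 ^ k).
Definition cc (n k : nat) : C := Cmult (Cpow Ci k) (RtoC (alpha n k)).
Definition Pp (n : nat) (t : R) : C := sum_n (fun k => Cmult (cc n k) (RtoC (t ^ (n - k)))) n.
Definition dPp (n : nat) (t : R) : C :=
  sum_n (fun k => Cmult (cc n k) (RtoC (INR (n - k) * t ^ (pred (n - k))))) n.
Definition Hh (n : nat) (t : R) : C := Cmult (cexpi t) (Pp n t).
Definition Ff (n : nat) (t : R) : C := Cdiv (Hh n t) (cc n n).

Lemma fact_INR_nz n : INR (fact n) <> 0.
Proof. apply INR_fact_neq_0. Qed.

Lemma alpha_0 n : alpha n 0 = 1.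
Proof. unfold alpha. rewrite Nat.add_0_r, Nat.sub_0_r. simpl. field. apply fact_INR_nz. Qed.

Lemma alpha_C2 p K : (K < p)%nat ->
  alpha (S p) (S K) = INR (S p - K) * alpha (S p) K + alpha p (S K).
Proof.
  intros HK. destruct (Nat.le_exists_sub (S K) p HK) as [q [Hq _]].
  subst p. unfold alpha.
  replace (S (q + S K) + S K)%nat with (S (S (S (2*K + q))))%nat by lia.
  replace (S (q + S K) - S K)%nat with (S q) by lia.
  replace (S (q + S K) + K)%nat with (S (S (2*K+q)))%nat by lia.
  replace (S (q + S K) - K)%nat with (S (S q)) by lia.
  replace (q + S K + S K)%nat with (S (S (2*K+q)))%nat by lia.
  replace (q + S K - S K)%nat with q by lia.
  rewrite !fact_simpl. rewrite !mult_INR. rewrite !S_INR, !plus_INR, !mult_INR. simpl.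
  pose proof (fact_INR_nz (2*K+q)). pose proof (fact_INR_nz K). pose proof (fact_INR_nz q).
  pose proof (pos_INR K). pose proof (pos_INR q).
  assert (2 ^ K <> 0) by (apply pow_nonzero; lra).
  simpl in *. field. repeat split; try lra; auto.
Qed.

Lemma alpha_C3 p : alpha (S p) p = alpha (S p) (S p).
Proof.
  unfold alpha.
  replace (S p + S p)%nat with (S (S (p + p))) by lia.
  replace (S p + p)%nat with (S (p + p)) by lia.
  replace (S p - S p)%nat with 0%nat by lia.
  replace (S p - p)%nat with 1%nat by lia.
  change (fact 0) with 1%nat. change (fact 1) with 1%nat.
  rewrite !fact_simpl, !mult_INR, !S_INR, !plus_INR. change (INR 1) with 1. change (INR 0) with 0.
  pose proof (fact_INR_nz (p + p)). pose proof (fact_INR_nz p). pose proof (pos_INR p).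
  assert (2 ^ p <> 0) by (apply pow_nonzero; lra).
  simpl pow. field. repeat split; try lra; auto.
Qed.

Lemma alpha_diag p : alpha (S p) (S p) = (2 * INR p + 1) * alpha p p.
Proof.
  unfold alpha.
  replace (S p + S p)%nat with (S (S (p + p))) by lia.
  rewrite !Nat.sub_diag. change (fact 0) with 1%nat.
  rewrite !fact_simpl, !mult_INR, !S_INR, !plus_INR. change (INR 1) with 1. change (INR 0) with 0.
  pose proof (fact_INR_nz (p + p)). pose proof (fact_INR_nz p). pose proof (pos_INR p).
  assert (2 ^ p <> 0) by (apply pow_nonzero; lra).
  simpl pow. field. repeat split; try lra; auto.
Qed.

Lemma alpha_pos n k : 0 < alpha n k.
Proof.
  unfold alpha. apply Rdiv_lt_0_compat. apply lt_0_INR, lt_O_fact.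
  repeat apply Rmult_lt_0_compat; try apply lt_0_INR, lt_O_fact. apply pow_lt; lra.
Qed.

Lemma Cmod_Cpow_Ci k : Cmod (Cpow Ci k) = 1.
Proof. induction k; simpl. apply Cmod_1. rewrite Cmod_mult, Cmod_Ci, IHk; ring. Qed.

Lemma Cpow_Ci_nz k : Cpow Ci k <> 0%C.
Proof. intros E. pose proof (Cmod_Cpow_Ci k). rewrite E, Cmod_0 in H. lra. Qed.

Lemma RtoC_nz r : r <> 0 -> RtoC r <> 0%C.
Proof. intros H E. apply H. injection E; auto. Qed.

Lemma cc_nz n k : cc n k <> 0%C.
Proof.
  unfold cc. intros E. apply (f_equal Cmod) in E. rewrite Cmod_mult, Cmod_Cpow_Ci, Cmod_R, Cmod_0 in E.
  pose proof (alpha_pos n k). rewrite Rabs_pos_eq in E; lra.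
Qed.

Lemma CiCi (z X : C) : Cmult Ci (Cmult (Cmult Ci z) X) = Copp (Cmult z X).
Proof. destruct z as [z1 z2], X as [x1 x2]. apply injective_projections; simpl; ring. Qed.

Lemma cc_0 n : cc n 0 = 1%C.
Proof. unfold cc. rewrite alpha_0. simpl. apply injective_projections; simpl; ring. Qed.

Lemma cc_C2 p K : (K < p)%nat ->
  Cplus (Cmult Ci (cc (S p) (S K))) (Cmult (RtoC (INR (S p - K))) (cc (S p) K)) = Cmult Ci (cc p (S K)).
Proof.
  intros HK. unfold cc. rewrite (alpha_C2 p K HK). simpl Cpow.
  rewrite !CiCi.
  destruct (Cpow Ci K) as [z1 z2]. apply injective_projections; simpl; ring.
Qed.

Lemma cc_C3 p : Cplus (cc (S p) p) (Cmult Ci (cc (S p) (S p))) = 0%C.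
Proof.
  unfold cc. rewrite <- alpha_C3. simpl Cpow. rewrite CiCi.
  destruct (Cpow Ci p) as [z1 z2]. apply injective_projections; simpl; ring.
Qed.

Lemma cc_ratio p : Cdiv (Cmult Ci (cc p p)) (cc (S p) (S p)) = RtoC (/ (2 * INR p + 1)).
Proof.
  assert (Hp : 2 * INR p + 1 <> 0) by (pose proof (pos_INR p); lra).
  pose proof (Cpow_Ci_nz p) as Hz.
  assert (Ha : RtoC (alpha p p) <> 0%C) by (apply RtoC_nz; pose proof (alpha_pos p p); lra).
  assert (Hq : RtoC (2 * INR p + 1) <> 0%C) by (apply RtoC_nz; auto).
  unfold cc. rewrite alpha_diag. simpl Cpow. rewrite RtoC_inv by auto. rewrite RtoC_mult.
  field. repeat split; auto. apply Ci_nz.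
Qed.

Lemma sumC_Sn (a : nat -> C) n : sum_n a (S n) = Cplus (sum_n a n) (a (S n)).
Proof. exact (sum_Sn a n). Qed.
Lemma sumC_O (a : nat -> C) : sum_n a 0 = a 0%nat.
Proof. exact (sum_O a). Qed.
Lemma sumC_plus (u v : nat -> C) n :
  sum_n (fun k => Cplus (u k) (v k)) n = Cplus (sum_n u n) (sum_n v n).
Proof. exact (sum_n_plus u v n). Qed.
Lemma sumC_mult_l (a : C) (u : nat -> C) n :
  sum_n (fun k => Cmult a (u k)) n = Cmult a (sum_n u n).
Proof. exact (sum_n_mult_l a u n). Qed.

Lemma poly_id p t :
  Cplus (Cmult Ci (Pp (S p) t)) (dPp (S p) t) = Cmult (Cmult Ci (RtoC t)) (Pp p t).
Proof.
  set (n := S p).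
  set (V := fun k => Cmult (cc n k) (RtoC (INR (n - k) * t ^ (pred (n - k))))).
  set (T := fun k => Cplus (Cmult Ci (Cmult (cc n k) (RtoC (t ^ (n - k))))) (V k)).
  set (W := fun k => Cmult (Cmult Ci (RtoC t)) (Cmult (cc p k) (RtoC (t ^ (p - k))))).
  assert (E1 : Cplus (Cmult Ci (Pp n t)) (dPp n t) = sum_n T n).
  { unfold T, Pp, dPp. rewrite sumC_plus, sumC_mult_l. reflexivity. }
  assert (E2 : Cmult (Cmult Ci (RtoC t)) (Pp p t) = sum_n W p).
  { unfold W, Pp. rewrite sumC_mult_l. reflexivity. }
  rewrite E1, E2.
  assert (Cl : forall K, (K <= p)%nat -> sum_n T K = Cplus (sum_n W K) (V K)).
  { induction K as [|K IH]; intros HK.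
    - rewrite !sumC_O. unfold T, W. rewrite !cc_0, !Nat.sub_0_r.
      unfold n. rewrite <- tech_pow_Rmult.
      destruct (V 0%nat) as [v1 v2].
      apply injective_projections; simpl; ring.
    - rewrite !sumC_Sn, IH by lia.
      assert (Key : Cplus (V K) (Cmult Ci (Cmult (cc n (S K)) (RtoC (t ^ (n - S K))))) = W (S K)).
      { unfold V, W. unfold n.
        replace (pred (S p - K)) with (p - K)%nat by lia.
        replace (S p - S K)%nat with (p - K)%nat by lia.
        transitivity (Cmult (Cplus (Cmult Ci (cc (S p) (S K))) (Cmult (RtoC (INR (S p - K))) (cc (S p) K))) (RtoC (t^(p-K)))).
        { destruct (cc (S p) (S K)) as [a1 a2], (cc (S p) K) as [b1 b2].
          apply injective_projections; simpl; ring. }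
        rewrite (cc_C2 p K HK).
        replace (p - K)%nat with (S (p - S K)) by lia. rewrite <- tech_pow_Rmult.
        destruct (cc p (S K)) as [a1 a2].
        apply injective_projections; simpl; ring. }
      unfold T. rewrite <- Key.
      destruct (sum_n W K) as [s1 s2], (V K) as [v1 v2], (V (S K)) as [w1 w2].
      destruct (Cmult Ci (Cmult (cc n (S K)) (RtoC (t ^ (n - S K))))) as [x1 x2].
      apply injective_projections; simpl; ring. }
  unfold n. rewrite sumC_Sn, Cl by lia.
  assert (Z : Cplus (V p) (T (S p)) = 0%C).
  { unfold T, V, n. rewrite Nat.sub_diag. replace (S p - p)%nat with 1%nat by lia.
    simpl pred. simpl pow. change (INR 1) with 1. change (INR 0) with 0.
    pose proof (cc_C3 p) as C3.
    destruct (cc (S p) p) as [a1 a2], (cc (S p) (S p)) as [b1 b2].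
    apply (f_equal fst) in C3 as F1. apply (f_equal snd) in C3 as F2. simpl in F1, F2.
    apply injective_projections; simpl; nra. }
  destruct (sum_n W p) as [s1 s2]. 
  revert Z. destruct (V p) as [v1 v2], (T (S p)) as [w1 w2]. intros Z.
  apply (f_equal fst) in Z as F1. apply (f_equal snd) in Z as F2. simpl in F1, F2.
  apply injective_projections; simpl; lra.
Qed.

Lemma Cder_P n t : Cder (Pp n) t (dPp n t).
Proof.
  unfold Pp, dPp.
  apply (Cder_sum_n (fun k s => Cmult (cc n k) (RtoC (s ^ (n - k))))).
  intros k.
  eapply Cder_eq; [|apply (Cder_mult (fun _ => cc n k) (fun s => RtoC (s ^ (n - k))))].
  3: { apply Cder_RtoC. eapply is_derive_ext; [|apply (is_derive_pow (fun x => x) (n - k) t 1)].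
       intros; reflexivity. exact (is_derive_id (K:=R_AbsRing) t). }
  2: apply Cder_const.
  destruct (cc n k) as [a1 a2]. apply injective_projections; simpl; ring.
Qed.

Lemma Cder_H p t : Cder (Hh (S p)) t (Cmult (Cmult Ci (RtoC t)) (Hh p t)).
Proof.
  unfold Hh.
  eapply Cder_eq; [|apply (Cder_mult cexpi (Pp (S p)) t _ _ (Cder_cexpi t) (Cder_P (S p) t))].
  transitivity (Cmult (cexpi t) (Cplus (Cmult Ci (Pp (S p) t)) (dPp (S p) t))).
  - destruct (cexpi t) as [a1 a2], (Pp (S p) t) as [b1 b2], (dPp (S p) t) as [c1 c2].
    apply injective_projections; simpl; ring.
  - rewrite poly_id. destruct (cexpi t) as [a1 a2], (Pp p t) as [b1 b2].
    apply injective_projections; simpl; ring.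
Qed.

Lemma Cder_F p t : Cder (Ff (S p)) t (Cmult (RtoC (t / (2 * INR p + 1))) (Ff p t)).
Proof.
  unfold Ff, Cdiv.
  eapply Cder_eq; [|apply (Cder_mult (Hh (S p)) (fun _ => Cinv (cc (S p) (S p))) t _ _ (Cder_H p t) (Cder_const _ t))].
  assert (Hp : 2 * INR p + 1 <> 0) by (pose proof (pos_INR p); lra).
  pose proof (cc_ratio p) as R. unfold Cdiv in R.
  unfold Rdiv. rewrite RtoC_mult, <- R.
  pose proof (cc_nz p p). pose proof (cc_nz (S p) (S p)).
  field. auto.
Qed.

Lemma Pp_0 n : Pp n 0 = cc n n.
Proof.
  unfold Pp. destruct n as [|p].
  - rewrite sumC_O. simpl pow. destruct (cc 0 0) as [a b]. apply injective_projections; simpl; ring.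
  - rewrite sumC_Sn. rewrite Nat.sub_diag.
    assert (Z : forall m, (m <= p)%nat -> sum_n (fun k => Cmult (cc (S p) k) (RtoC (0 ^ (S p - k)))) m = RtoC 0 :> C).
    { induction m; intros Hm.
      - rewrite sumC_O. simpl pow. destruct (cc (S p) 0) as [a b]. apply injective_projections; simpl; ring.
      - rewrite sumC_Sn, IHm by lia. replace (S p - S m)%nat with (S (p - S m)) by lia. simpl pow.
        destruct (cc (S p) (S m)) as [a b]. apply injective_projections; simpl; ring. }
    rewrite Z by lia. simpl pow. destruct (cc (S p) (S p)) as [a b]. apply injective_projections; simpl; ring.
Qed.

Lemma Ff_0 n : Ff n 0 = 1%C.
Proof.
  unfold Ff, Hh. rewrite Pp_0.
  assert (E : cexpi 0 = 1%C) by (unfold cexpi; rewrite cos_0, sin_0; reflexivity).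
  rewrite E. pose proof (cc_nz n n). field. auto.
Qed.

Lemma Ff_zero t : Ff 0 t = cexpi t.
Proof.
  unfold Ff, Hh, Pp. rewrite sumC_O. simpl pow. rewrite cc_0.
  field.
Qed.

Lemma Cmod_cexpi t : Cmod (cexpi t) = 1.
Proof.
  unfold Cmod, cexpi. cbn [fst snd].
  replace (cos t ^ 2 + sin t ^ 2) with 1 by (pose proof (sin2_cos2 t); unfold Rsqr in *; simpl; lra).
  apply sqrt_1.
Qed.

Lemma Cmod_le_1_plus (z : C) : Cmod z <= 1 + Cmod (Cminus z 1).
Proof.
  replace z with (Cplus 1 (Cminus z 1)) at 1 by ring.
  eapply Rle_trans; [apply Cmod_triangle|]. rewrite Cmod_1. lra.
Qed.

Lemma F_step p X Bp : (forall t, Rabs t <= X -> Cmod (Ff p t) <= Bp) ->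
  forall y, Rabs y <= X -> Cmod (Cminus (Ff (S p) y) 1) <= 2 * (X * Bp / (2 * INR p + 1)) * Rabs y.
Proof.
  intros HB y Hy.
  assert (Hp : 0 < 2 * INR p + 1) by (pose proof (pos_INR p); lra).
  assert (HX : 0 <= X) by (eapply Rle_trans; [apply Rabs_pos|exact Hy]).
  assert (HB0 : 0 <= Bp).
  { eapply Rle_trans; [apply Cmod_ge_0|apply HB]. rewrite Rabs_R0; auto. }
  rewrite <- (Ff_0 (S p)).
  apply (C_bv (Ff (S p)) (fun t => Cmult (RtoC (t / (2 * INR p + 1))) (Ff p t))).
  intros t Ht. split. apply Cder_F.
  rewrite Cmod_mult, Cmod_R. unfold Rdiv. rewrite Rabs_mult, (Rabs_pos_eq (/ _)).
  2: { left; apply Rinv_0_lt_compat; auto. }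
  assert (Rabs t <= X) by lra.
  assert (0 <= / (2 * INR p + 1)) by (left; apply Rinv_0_lt_compat; auto).
  assert (Cmod (Ff p t) <= Bp) by auto.
  pose proof (Cmod_ge_0 (Ff p t)). pose proof (Rabs_pos t).
  apply Rle_trans with (X * / (2 * INR p + 1) * Bp).
  apply Rmult_le_compat; auto. apply Rmult_le_pos; auto. apply Rmult_le_compat_r; auto.
  lra.
Qed.

Fixpoint Bs (X : R) (m : nat) : R :=
  match m with
  | O => 1
  | S p => 1 + 2 * X * X * Bs X p / (2 * INR p + 1)
  end.

Lemma Bs_ge1 X m : 1 <= Bs X m.
Proof.
  destruct m; simpl. lra.
  assert (0 <= 2 * X * X * Bs X m / (2 * INR m + 1)); [|lra].
  pose proof (pos_INR m).
  apply Rmult_le_pos. 2: (left; apply Rinv_0_lt_compat; lra).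
  induction m. simpl; nra.
  simpl. apply Rmult_le_pos. nra. 
  assert (0 <= 2 * X * X * Bs X m / (2 * INR m + 1)).
  { apply Rmult_le_pos. apply IHm. apply pos_INR. left; apply Rinv_0_lt_compat; pose proof (pos_INR m); lra. }
  lra.
Qed.

Lemma F_bound_Bs X : 0 <= X -> forall m t, Rabs t <= X -> Cmod (Ff m t) <= Bs X m.
Proof.
  intros HX m. induction m; intros t Ht.
  - rewrite Ff_zero, Cmod_cexpi. simpl; lra.
  - eapply Rle_trans; [apply Cmod_le_1_plus|]. simpl Bs.
    pose proof (F_step m X (Bs X m) IHm t Ht).
    assert (Hp : 0 < 2 * INR m + 1) by (pose proof (pos_INR m); lra).
    assert (0 <= X * Bs X m / (2 * INR m + 1)).
    { pose proof (Bs_ge1 X m). apply Rmult_le_pos. nra. left; apply Rinv_0_lt_compat; auto. }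
    apply Rplus_le_compat_l. eapply Rle_trans; [exact H|].
    replace (2 * X * X * Bs X m / (2 * INR m + 1)) with (2 * (X * Bs X m / (2 * INR m + 1)) * X) by (field; lra).
    apply Rmult_le_compat_l; nra.
Qed.

Lemma nat_ge (r : R) : exists N : nat, r <= INR N.
Proof.
  destruct (archimed (Rabs r)) as [H1 _].
  exists (Z.to_nat (up (Rabs r))).
  assert (0 < up (Rabs r))%Z by (apply lt_IZR; pose proof (Rabs_pos r); lra).
  rewrite INR_IZR_INZ, Z2Nat.id by lia. pose proof (Rle_abs r). lra.
Qed.

Lemma sum_f_R0_ge (f : nat -> R) N k : (forall i, 0 <= f i) -> (k <= N)%nat -> f k <= sum_f_R0 f N.
Proof.
  intros Hf Hk. induction N.
  - replace k with 0%nat by lia. simpl; lra.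
  - simpl. destruct (Nat.eq_dec k (S N)) as [->|Hne].
    + assert (0 <= sum_f_R0 f N) by (apply cond_pos_sum; auto). lra.
    + pose proof (Hf (S N)). assert (f k <= sum_f_R0 f N) by (apply IHN; lia). lra.
Qed.

Lemma Bs_bounded X : exists B, forall m, Bs X m <= B.
Proof.
  destruct (nat_ge (2 * X * X)) as [m0 Hm0].
  exists (2 + sum_f_R0 (Bs X) m0).
  assert (Hpos : forall i, 0 <= Bs X i) by (intros i; pose proof (Bs_ge1 X i); lra).
  assert (Hs : 0 <= sum_f_R0 (Bs X) m0) by (apply cond_pos_sum; auto).
  intros m. induction m.
  - pose proof (sum_f_R0_ge (Bs X) m0 0 Hpos ltac:(lia)). lra.
  - destruct (le_lt_dec (S m) m0) as [Hle|Hlt].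
    + pose proof (sum_f_R0_ge (Bs X) m0 (S m) Hpos Hle). lra.
    + simpl Bs. assert (INR m0 <= INR m) by (apply le_INR; lia).
      assert (Hp : 0 < 2 * INR m + 1) by (pose proof (pos_INR m); lra).
      assert (2 * X * X * Bs X m / (2 * INR m + 1) <= Bs X m / 2).
      { apply Rmult_le_reg_r with (2 * INR m + 1); auto.
        unfold Rdiv. rewrite Rmult_assoc, Rinv_l by lra. pose proof (Hpos m). nra. }
      lra.
Qed.

Lemma F_expand X B p t : 0 <= X -> (forall m s, Rabs s <= X -> Cmod (Ff m s) <= B) -> Rabs t <= X ->
  Cmod (Cminus (Ff (S (S p)) t) (RtoC (1 + t ^ 2 / (2 * (2 * INR p + 3)))))
  <= 4 * X ^ 4 * B / ((2 * INR p + 3) * (2 * INR p + 1)).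
Proof.
  intros HX HB Ht.
  assert (Hp1 : 0 < 2 * INR p + 1) by (pose proof (pos_INR p); lra).
  assert (Hp3 : 0 < 2 * INR p + 3) by (pose proof (pos_INR p); lra).
  assert (HB0 : 0 <= B).
  { eapply Rle_trans; [apply Cmod_ge_0|apply (HB 0%nat 0)]. rewrite Rabs_R0; auto. }
  assert (S1 : forall s, Rabs s <= X -> Cmod (Cminus (Ff (S p) s) 1) <= 2 * X * X * B / (2 * INR p + 1)).
  { intros s Hs. eapply Rle_trans; [apply (F_step p X B (HB p) s Hs)|].
    replace (2 * X * X * B / (2 * INR p + 1)) with (2 * (X * B / (2 * INR p + 1)) * X) by (field; lra).
    apply Rmult_le_compat_l; auto.
    apply Rmult_le_pos; [lra|]. apply Rmult_le_pos. nra. left; apply Rinv_0_lt_compat; auto. }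
  set (g := fun s => Cminus (Ff (S (S p)) s) (RtoC (1 + s ^ 2 / (2 * (2 * INR p + 3))))).
  assert (g0 : g 0 = 0%C).
  { unfold g. rewrite Ff_0. apply injective_projections; simpl; field; lra. }
  change (Cmod (g t) <= 4 * X ^ 4 * B / ((2 * INR p + 3) * (2 * INR p + 1))).
  replace (g t) with (Cminus (g t) (g 0)) by (rewrite g0; destruct (g t); apply injective_projections; simpl; ring).
  eapply Rle_trans.
  apply (C_bv g (fun s => Cmult (RtoC (s / (2 * INR p + 3))) (Cminus (Ff (S p) s) 1))
           (X * (2 * X * X * B / (2 * INR p + 1)) / (2 * INR p + 3))).
  - intros s Hs. split.
    + unfold g. eapply Cder_eq; [|apply Cder_minus; [apply Cder_F|apply Cder_RtoC]].
      2: { auto_derive. auto. reflexivity. }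
      rewrite S_INR.
      replace (2 * (INR p + 1) + 1) with (2 * INR p + 3) by ring.
      destruct (Ff (S p) s) as [a b]. apply injective_projections; simpl; field; lra.
    + rewrite Cmod_mult, Cmod_R. unfold Rdiv at 1. rewrite Rabs_mult, (Rabs_pos_eq (/ (2 * INR p + 3))).
      2: { left; apply Rinv_0_lt_compat; auto. }
      assert (Rabs s <= X) by lra.
      pose proof (S1 s H). pose proof (Cmod_ge_0 (Cminus (Ff (S p) s) 1)). pose proof (Rabs_pos s).
      assert (0 <= / (2 * INR p + 3)) by (left; apply Rinv_0_lt_compat; auto).
      unfold Rdiv. 
      replace (X * (2 * X * X * B * / (2 * INR p + 1)) * / (2 * INR p + 3))
        with (X * / (2 * INR p + 3) * (2 * X * X * B * / (2 * INR p + 1))) by ring.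
      apply Rmult_le_compat; auto. apply Rmult_le_pos; auto. apply Rmult_le_compat_r; auto.
  - replace (4 * X ^ 4 * B / ((2 * INR p + 3) * (2 * INR p + 1)))
      with (2 * (X * (2 * X * X * B / (2 * INR p + 1)) / (2 * INR p + 3)) * X) by (field; lra).
    apply Rmult_le_compat_l; auto.
    apply Rmult_le_pos; [lra|]. unfold Rdiv. repeat apply Rmult_le_pos; try lra; auto.
    left; apply Rinv_0_lt_compat; auto. left; apply Rinv_0_lt_compat; auto.
Qed.

Lemma Cmod_Cpow (z : C) k : Cmod (Cpow z k) = Cmod z ^ k.
Proof. induction k; simpl. apply Cmod_1. rewrite Cmod_mult, IHk; ring. Qed.

Lemma Cmod_mCi : Cmod (Copp Ci) = 1.
Proof. unfold Cmod; simpl. transitivity (sqrt 1); [f_equal; ring|apply sqrt_1]. Qed.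

Lemma Kn_nz n : Cpow (Copp Ci) n <> 0%C.
Proof. intros E. apply (f_equal Cmod) in E. rewrite Cmod_Cpow, Cmod_mCi, pow1, Cmod_0 in E. lra. Qed.

Lemma hankel_H n x : 0 < x ->
  sph_hankel1 n x = Cmult (Cpow (Copp Ci) (S n)) (Cmult (RtoC (/ x ^ S n)) (Hh n x)).
Proof.
  intros Hx. unfold sph_hankel1, Hh.
  assert (E : sum_n (fun k : nat =>
       Cmult (Cpow Ci k)
         (RtoC (INR (fact (n + k)) /
                (INR (fact k) * INR (fact (n - k)) * (2 * x) ^ k)))) n
     = Cmult (RtoC (/ x ^ n)) (Pp n x)).
  { unfold Pp. rewrite <- sumC_mult_l. apply sum_n_ext_loc. intros k Hk.
    unfold cc, alpha.
    assert (R : INR (fact (n + k)) / (INR (fact k) * INR (fact (n - k)) * (2 * x) ^ k)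
      = / x ^ n * (INR (fact (n + k)) / (INR (fact k) * INR (fact (n - k)) * 2 ^ k) * x ^ (n - k))).
    { rewrite Rpow_mult_distr.
      replace (x ^ n) with (x ^ (n - k) * x ^ k) by (rewrite <- pow_add; f_equal; lia).
      pose proof (fact_INR_nz (n+k)). pose proof (fact_INR_nz k). pose proof (fact_INR_nz (n-k)).
      assert (x ^ k <> 0) by (apply pow_nonzero; lra).
      assert (x ^ (n - k) <> 0) by (apply pow_nonzero; lra).
      assert (2 ^ k <> 0) by (apply pow_nonzero; lra).
      field. repeat split; auto. }
    rewrite R. destruct (Cpow Ci k) as [z1 z2]. apply injective_projections; simpl; ring. }
  rewrite E.
  replace (/ x ^ S n) with (/ x * / x ^ n) by (simpl; field; split; [apply pow_nonzero|]; lra).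
  rewrite RtoC_mult. ring.
Qed.

Lemma Hh_F n x : Hh n x = Cmult (cc n n) (Ff n x).
Proof. unfold Ff. pose proof (cc_nz n n). field. auto. Qed.

Lemma ratio_F n a b : 0 < a -> 0 < b -> Ff n b <> 0%C ->
  Cdiv (sph_hankel1 n a) (sph_hankel1 n b) = Cmult (RtoC ((b / a) ^ S n)) (Cdiv (Ff n a) (Ff n b)).
Proof.
  intros Ha Hb HF. rewrite !hankel_H by auto. rewrite !Hh_F.
  assert (Ea : a ^ S n <> 0) by (apply pow_nonzero; lra).
  assert (Eb : b ^ S n <> 0) by (apply pow_nonzero; lra).
  replace ((b / a) ^ S n) with (/ a ^ S n * / / b ^ S n)
    by (unfold Rdiv; rewrite Rpow_mult_distr, pow_inv; field; auto).
  rewrite RtoC_mult, (RtoC_inv (/ b ^ S n)) by (apply Rinv_neq_0_compat; auto).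
  pose proof (Kn_nz (S n)). pose proof (cc_nz n n).
  assert (RtoC (/ b ^ S n) <> 0%C) by (apply RtoC_nz; apply Rinv_neq_0_compat; auto).
  field. repeat split; auto.
Qed.

Lemma Cmod_minus_le (x y : C) : Cmod (Cminus x y) <= Cmod x + Cmod y.
Proof.
  unfold Cminus. eapply Rle_trans; [apply Cmod_triangle|]. rewrite Cmod_opp. lra.
Qed.

Lemma Cmod_lower (F : C) u d : 0 <= u -> Cmod (Cminus F (RtoC (1 + u))) <= d -> 1 + u - d <= Cmod F.
Proof.
  intros Hu Hd.
  assert (E : RtoC (1 + u) = Cminus F (Cminus F (RtoC (1 + u)))) by ring.
  pose proof (Cmod_minus_le F (Cminus F (RtoC (1 + u)))) as T. rewrite <- E, Cmod_R, Rabs_pos_eq in T; lra.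
Qed.

Lemma six (t1 t2 t3 t4 t5 t6 : C) :
  Cmod (Cminus (Cminus (Cminus (Cplus (Cplus t1 t2) t3) t4) t5) t6)
  <= Cmod t1 + Cmod t2 + Cmod t3 + Cmod t4 + Cmod t5 + Cmod t6.
Proof.
  pose proof (Cmod_minus_le (Cminus (Cminus (Cplus (Cplus t1 t2) t3) t4) t5) t6).
  pose proof (Cmod_minus_le (Cminus (Cplus (Cplus t1 t2) t3) t4) t5).
  pose proof (Cmod_minus_le (Cplus (Cplus t1 t2) t3) t4).
  pose proof (Cmod_triangle (Cplus t1 t2) t3).
  pose proof (Cmod_triangle t1 t2). lra.
Qed.

Lemma alg (Fa Fb Fc Fd : C) (ua ub uc ud d : R) :
  0 <= ua <= 1 -> 0 <= ub <= 1 -> 0 <= uc <= 1 -> 0 <= ud <= 1 -> 0 <= d <= 1/10 ->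
  Cmod (Cminus Fa (RtoC (1 + ua))) <= d -> Cmod (Cminus Fb (RtoC (1 + ub))) <= d ->
  Cmod (Cminus Fc (RtoC (1 + uc))) <= d -> Cmod (Cminus Fd (RtoC (1 + ud))) <= d ->
  ua * ud = ub * uc ->
  Cmod (Cminus (Cdiv Fa Fb) (Cdiv Fc Fd)) <= 100 / 81 * (Rabs (ua + ud - ub - uc) + 12 * d).
Proof.
  intros Ha Hb Hc Hd Hdd HA HB HC HD Hu.
  pose proof (Cmod_lower Fb ub d (proj1 Hb) HB) as LB.
  pose proof (Cmod_lower Fd ud d (proj1 Hd) HD) as LD.
  assert (Fb <> 0%C) by (intros E; rewrite E, Cmod_0 in LB; lra).
  assert (Fd <> 0%C) by (intros E; rewrite E, Cmod_0 in LD; lra).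
  assert (Q : Cminus (Cdiv Fa Fb) (Cdiv Fc Fd) = Cdiv (Cminus (Cmult Fa Fd) (Cmult Fc Fb)) (Cmult Fb Fd))
    by (field; auto).
  rewrite Q, Cmod_div by (intros E; apply (f_equal Cmod) in E; rewrite Cmod_mult, Cmod_0 in E; nra).
  rewrite Cmod_mult.
  set (Ea := Cminus Fa (RtoC (1 + ua))) in *. set (Eb := Cminus Fb (RtoC (1 + ub))) in *.
  set (Ec := Cminus Fc (RtoC (1 + uc))) in *. set (Ed := Cminus Fd (RtoC (1 + ud))) in *.
  assert (N : Cminus (Cmult Fa Fd) (Cmult Fc Fb) =
    Cplus (RtoC (ua + ud - ub - uc + (ua * ud - ub * uc)))
     (Cminus (Cminus (Cminus (Cplus (Cplus (Cmult Ea (RtoC (1 + ud))) (Cmult (RtoC (1 + ua)) Ed)) (Cmult Ea Ed))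
       (Cmult Ec (RtoC (1 + ub)))) (Cmult (RtoC (1 + uc)) Eb)) (Cmult Ec Eb))).
  { unfold Ea, Eb, Ec, Ed. destruct Fa, Fb, Fc, Fd. apply injective_projections; simpl; ring. }
  rewrite N. rewrite Hu, Rminus_diag, Rplus_0_r.
  assert (Num : Cmod (Cplus (RtoC (ua + ud - ub - uc))
     (Cminus (Cminus (Cminus (Cplus (Cplus (Cmult Ea (RtoC (1 + ud))) (Cmult (RtoC (1 + ua)) Ed)) (Cmult Ea Ed))
       (Cmult Ec (RtoC (1 + ub)))) (Cmult (RtoC (1 + uc)) Eb)) (Cmult Ec Eb)))
     <= Rabs (ua + ud - ub - uc) + 12 * d).
  { eapply Rle_trans; [apply Cmod_triangle|]. rewrite Cmod_R. apply Rplus_le_compat_l.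
    eapply Rle_trans; [apply six|].
    rewrite !Cmod_mult, !Cmod_R, !Rabs_pos_eq by lra.
    pose proof (Cmod_ge_0 Ea). pose proof (Cmod_ge_0 Eb). pose proof (Cmod_ge_0 Ec). pose proof (Cmod_ge_0 Ed).
    nra. }
  assert (0 < Cmod Fb * Cmod Fd) by nra.
  assert (81/100 <= Cmod Fb * Cmod Fd) by nra.
  pose proof (Rabs_pos (ua + ud - ub - uc)).
  apply Rle_trans with ((Rabs (ua + ud - ub - uc) + 12 * d) / (Cmod Fb * Cmod Fd)).
  { unfold Rdiv. apply Rmult_le_compat_r; [left; apply Rinv_0_lt_compat; auto|exact Num]. }
  unfold Rdiv. rewrite Rmult_comm. apply Rmult_le_compat_r. lra.
  replace (100 * / 81) with (/ (81/100)) by field. apply Rinv_le_contravar; lra.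
Qed.

Lemma h1_nz n x : 0 < x -> Ff n x <> 0%C -> sph_hankel1 n x <> 0%C.
Proof.
  intros Hx HF E. rewrite hankel_H, Hh_F in E by auto.
  apply (f_equal Cmod) in E. rewrite !Cmod_mult, Cmod_Cpow, Cmod_mCi, pow1, Cmod_R, Cmod_0 in E.
  assert (0 < Cmod (cc n n)) by (apply Cmod_gt_0, cc_nz).
  assert (0 < Cmod (Ff n x)) by (apply Cmod_gt_0; auto).
  assert (0 < / x ^ S n) by (apply Rinv_0_lt_compat, pow_lt; auto).
  rewrite Rabs_pos_eq in E by lra.
  assert (0 < / x ^ S n * (Cmod (cc n n) * Cmod (Ff n x))) by (apply Rmult_lt_0_compat; auto; apply Rmult_lt_0_compat; auto).
  lra.
Qed.

Theorem lemmaE5 (kp ks R0 R1 : R) :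
  0 < kp -> kp < ks -> 0 < R1 -> R1 < R0 ->
  exists N : nat, forall n : nat, (N <= n)%nat ->
    forall j : nat, (j = 1 \/ j = 2)%nat ->
      Cmod (Cminus (Cdiv (sph_hankel j n (kp * R0)) (sph_hankel j n (kp * R1)))
                   (Cdiv (sph_hankel j n (ks * R0)) (sph_hankel j n (ks * R1))))
      <= 14 / 3 * (ks * (ks - kp) / INR n) * R0 * (R0 - R1) * (R1 / R0) ^ (n + 1).
Proof.
  intros Hkp Hks HR1 HR0.
  set (X := ks * R0).
  assert (HX : 0 < X) by (unfold X; nra).
  destruct (Bs_bounded X) as [B HBs].
  assert (HB : forall m s, Rabs s <= X -> Cmod (Ff m s) <= B).
  { intros m s Hs. eapply Rle_trans; [apply (F_bound_Bs X); auto; lra|apply HBs]. }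
  assert (HB1 : 1 <= B) by (eapply Rle_trans; [apply (Bs_ge1 X 0)|apply HBs]).
  set (M := ks * (ks - kp) * R0 * (R0 - R1)).
  assert (HM : 0 < M) by (unfold M; apply Rmult_lt_0_compat; [|lra]; apply Rmult_lt_0_compat; [|lra];
                           apply Rmult_lt_0_compat; lra).
  set (K4 := 4 * X ^ 4 * B).
  assert (HK4 : 0 < K4) by (unfold K4; assert (0 < X ^ 4) by (apply pow_lt; lra); nra).
  destruct (nat_ge (3 + X ^ 2 + 10 * K4 + 12 * K4 / M)) as [N HN].
  exists N. intros n Hn.
  assert (Hnn : INR N <= INR n) by (apply le_INR; auto).
  assert (HKM : 0 < 12 * K4 / M) by (apply Rdiv_lt_0_compat; lra).
  assert (HX2 : 0 < X ^ 2) by (apply pow_lt; lra).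
  destruct n as [|[|p]].
  { simpl in Hnn. lra. }
  { simpl in Hnn. lra. }
  set (nn := INR (S (S p))).
  assert (Enn : nn = INR p + 2) by (unfold nn; rewrite !S_INR; ring).
  assert (Hbig : 3 + X ^ 2 + 10 * K4 + 12 * K4 / M <= nn) by (unfold nn; lra).
  set (a := kp * R0). set (b := kp * R1). set (c := ks * R0). set (d := ks * R1).
  assert (Ha : 0 < a) by (unfold a; nra). assert (Hb : 0 < b) by (unfold b; nra).
  assert (Hc : 0 < c) by (unfold c; nra). assert (Hd : 0 < d) by (unfold d; nra).
  assert (Ha' : Rabs a <= X) by (rewrite Rabs_pos_eq by lra; unfold a, X; nra).
  assert (Hb' : Rabs b <= X) by (rewrite Rabs_pos_eq by lra; unfold b, X; nra).
  assert (Hc' : Rabs c <= X) by (rewrite Rabs_pos_eq by lra; unfold c, X; nra).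
  assert (Hd' : Rabs d <= X) by (rewrite Rabs_pos_eq by lra; unfold d, X; nra).
  set (q := 2 * INR p + 3).
  set (dl := 4 * X ^ 4 * B / ((2 * INR p + 3) * (2 * INR p + 1))).
  assert (Hq : q = 2 * nn - 1) by (unfold q; lra).
  assert (Hp1 : 2 * INR p + 1 = 2 * nn - 3) by lra.
  assert (Hnn3 : 3 <= nn) by lra.
  assert (Hden : nn ^ 2 <= (2 * INR p + 3) * (2 * INR p + 1)).
  { rewrite Hp1. fold q. rewrite Hq. nra. }
  assert (Hdl : 0 <= dl <= K4 / nn ^ 2).
  { unfold dl. fold K4. split.
    - apply Rmult_le_pos; [lra|]. left; apply Rinv_0_lt_compat. pose proof (pos_INR p); nra.
    - apply Rmult_le_compat_l; [lra|]. apply Rinv_le_contravar; auto. apply pow_lt; lra. }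
  assert (Hdl2 : K4 / nn ^ 2 <= K4 / nn).
  { apply Rmult_le_compat_l; [lra|]. apply Rinv_le_contravar; [lra|]. simpl; nra. }
  assert (Hdl3 : K4 / nn <= 1 / 10).
  { apply Rmult_le_reg_r with nn; [lra|]. unfold Rdiv. rewrite Rmult_assoc, Rinv_l by lra. nra. }
  assert (Hdl4 : 12 * K4 / nn ^ 2 <= M / nn).
  { assert (12 * K4 <= M * nn).
    { assert (12 * K4 / M * M = 12 * K4) by (field; lra).
      assert (12 * K4 / M * M <= nn * M) by (apply Rmult_le_compat_r; lra). lra. }
    replace (12 * K4 / nn ^ 2) with (12 * K4 * / nn * / nn) by (simpl; field; lra).
    replace (M / nn) with (M * nn * / nn * / nn) by (field; lra).
    apply Rmult_le_compat_r. left; apply Rinv_0_lt_compat; lra.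
    apply Rmult_le_compat_r. left; apply Rinv_0_lt_compat; lra. auto. }
  set (u := fun x => x ^ 2 / (2 * (2 * INR p + 3))).
  assert (Hu : forall x, Rabs x <= X -> 0 <= u x <= 1).
  { intros x Hx. unfold u. fold q. assert (0 < q) by lra. split.
    - apply Rmult_le_pos. apply pow2_ge_0. left; apply Rinv_0_lt_compat; lra.
    - apply Rmult_le_reg_r with (2 * q); [lra|]. unfold Rdiv. rewrite Rmult_assoc, Rinv_l by lra.
      assert (x ^ 2 <= X ^ 2).
      { rewrite <- (pow2_abs x). apply pow_incr. split; [apply Rabs_pos|auto]. }
      nra. }
  assert (EF : forall x, Rabs x <= X -> Cmod (Cminus (Ff (S (S p)) x) (RtoC (1 + u x))) <= dl).
  { intros x Hx. apply (F_expand X B p x); auto; lra. }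
  assert (Hdl5 : 0 <= dl <= 1 / 10) by lra.
  assert (Alg := alg (Ff (S (S p)) a) (Ff (S (S p)) b) (Ff (S (S p)) c) (Ff (S (S p)) d)
                   (u a) (u b) (u c) (u d) dl (Hu a Ha') (Hu b Hb') (Hu c Hc') (Hu d Hd') Hdl5
                   (EF a Ha') (EF b Hb') (EF c Hc') (EF d Hd')
                   ltac:(unfold u, a, b, c, d; field; lra)).
  assert (Fb0 : Ff (S (S p)) b <> 0%C).
  { intros E. pose proof (Cmod_lower _ _ _ (proj1 (Hu b Hb')) (EF b Hb')) as L. rewrite E, Cmod_0 in L. pose proof (Hu b Hb'). pose proof (Hu d Hd'). lra. }
  assert (Fd0 : Ff (S (S p)) d <> 0%C).
  { intros E. pose proof (Cmod_lower _ _ _ (proj1 (Hu d Hd')) (EF d Hd')) as L. rewrite E, Cmod_0 in L. pose proof (Hu b Hb'). pose proof (Hu d Hd'). lra. }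
  assert (HS : Rabs (u a + u d - u b - u c) <= 4 / 3 * (M / nn)).
  { replace (u a + u d - u b - u c) with (- ((ks ^ 2 - kp ^ 2) * (R0 ^ 2 - R1 ^ 2) / (2 * q)))
      by (unfold u, a, b, c, d; fold q; field; lra).
    rewrite Rabs_Ropp, Rabs_pos_eq.
    2: { apply Rmult_le_pos. apply Rmult_le_pos; nra. left; apply Rinv_0_lt_compat; lra. }
    assert (A1 : 0 <= ks ^ 2 - kp ^ 2 <= 2 * ks * (ks - kp)) by nra.
    assert (A2 : 0 <= R0 ^ 2 - R1 ^ 2 <= 2 * R0 * (R0 - R1)) by nra.
    assert (E1 : (ks ^ 2 - kp ^ 2) * (R0 ^ 2 - R1 ^ 2) <= 4 * M).
    { apply Rle_trans with ((2 * ks * (ks - kp)) * (2 * R0 * (R0 - R1))).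
      apply Rmult_le_compat; lra. unfold M; right; ring. }
    apply Rle_trans with (4 * M / (2 * q)).
    { apply Rmult_le_compat_r; [left; apply Rinv_0_lt_compat; lra|auto]. }
    rewrite Hq. apply Rmult_le_reg_r with (2 * (2 * nn - 1) * nn * 3); [nra|].
    replace (4 * M / (2 * (2 * nn - 1)) * (2 * (2 * nn - 1) * nn * 3)) with (12 * M * nn) by (field; lra).
    replace (4 / 3 * (M / nn) * (2 * (2 * nn - 1) * nn * 3)) with (8 * M * (2 * nn - 1)) by (field; lra).
    nra. }
  assert (HFr : Cmod (Cminus (Cdiv (Ff (S (S p)) a) (Ff (S (S p)) b)) (Cdiv (Ff (S (S p)) c) (Ff (S (S p)) d)))
               <= 14 / 3 * (M / nn)).
  { eapply Rle_trans; [exact Alg|].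
    assert (12 * dl <= M / nn).
    { apply Rle_trans with (12 * K4 / nn ^ 2); [|auto]. unfold Rdiv. rewrite Rmult_assoc.
      apply Rmult_le_compat_l; [lra|]. apply Hdl. }
    assert (0 <= M / nn) by (apply Rmult_le_pos; [lra|left; apply Rinv_0_lt_compat; lra]).
    lra. }
  assert (Main : Cmod (Cminus (Cdiv (sph_hankel1 (S (S p)) a) (sph_hankel1 (S (S p)) b))
                             (Cdiv (sph_hankel1 (S (S p)) c) (sph_hankel1 (S (S p)) d)))
      <= 14 / 3 * (ks * (ks - kp) / nn) * R0 * (R0 - R1) * (R1 / R0) ^ (S (S p) + 1)).
  { rewrite (ratio_F _ a b), (ratio_F _ c d) by auto.
    replace (b / a) with (R1 / R0) by (unfold a, b; field; lra).
    replace (d / c) with (R1 / R0) by (unfold c, d; field; lra).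
    set (r := (R1 / R0) ^ S (S (S p))).
    assert (Hr : 0 < r) by (apply pow_lt; apply Rdiv_lt_0_compat; lra).
    set (Y := Cdiv (Ff (S (S p)) a) (Ff (S (S p)) b)). set (Z := Cdiv (Ff (S (S p)) c) (Ff (S (S p)) d)).
    replace (Cminus (Cmult (RtoC r) Y) (Cmult (RtoC r) Z)) with (Cmult (RtoC r) (Cminus Y Z))
      by (destruct Y, Z; apply injective_projections; simpl; ring).
    rewrite Cmod_mult, Cmod_R, Rabs_pos_eq by lra.
    rewrite Nat.add_1_r. fold r.
    replace (14 / 3 * (ks * (ks - kp) / nn) * R0 * (R0 - R1) * r) with (r * (14 / 3 * (M / nn)))
      by (unfold M; field; lra).
    apply Rmult_le_compat_l; [lra|exact HFr]. }
  intros j Hj. destruct Hj as [-> | ->].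
  - exact Main.
  - unfold sph_hankel. simpl Nat.eqb. cbv iota. unfold sph_hankel2.
    pose proof (h1_nz _ b Hb Fb0). pose proof (h1_nz _ d Hd Fd0).
    rewrite <- !Cdiv_conj by auto. rewrite <- Cminus_conj, Cmod_conj. exact Main.
Qed.
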